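(* Let $h$ and $k$ be coprime odd integers with $k>0$. Then $$B_{1}(h,k)=\frac{h}{2k}\sum_{\substack{j=1\\ j\neq\frac{k+1}{2}}}^{k}\tan\left(\frac{\pi h(2j-1)}{2k}\right)\cot\left(\frac{\pi(2j-1)}{2k}\right)+\frac{1}{2k}-\frac{1}{2}.$$
   Context: $[x]$ denotes the greatest integer $\le x$. For integers $h,k$ with $k>0$ and $\gcd(h,k)=1$, $$B_{1}(h,k)=\sum_{j=1}^{k-1}(-1)^{j+\left[\frac{hj}{k}\right]}\left[\frac{hj}{k}\right].$$ *)

(* Defs.v *)
From Stdlib Require Import Reals ZArith Lia.
Open Scope R_scope.

(* [x] = greatest integer <= x; for x = h*j/k with k > 0 this is Z.div (floor division). *)
Definition floorQ (h j k : Z) : Z := (h * j / k)%Z.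

Definition B_one (h k : Z) : Z :=
  List.fold_right Z.add 0%Z
    (List.map (fun n : nat =>
       let j := Z.of_nat n in
       let f := floorQ h j k in
       (if Z.even (j + f) then f else - f)%Z)
     (List.seq 1 (Z.to_nat (k - 1)))).

Definition cot (x : R) : R := cos x / sin x.

Definition tan_cot_sum (h k : Z) : R :=
  List.fold_right Rplus 0
    (List.map (fun n : nat =>
       let j := Z.of_nat n in
       if Z.eqb (2 * j) (k + 1) then 0
       else tan (PI * IZR h * IZR (2 * j - 1) / (2 * IZR k))
            * cot (PI * IZR (2 * j - 1) / (2 * IZR k)))
     (List.seq 1 (Z.to_nat k))).

(* Main.v *)
Require Import Defs.
From Stdlib Require Import Reals ZArith Lia Lra List Permutation.
Open Scope R_scope.

Definition rs (f : nat -> R) (a n : nat) : R := fold_right Rplus 0 (map f (seq a n)).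

Lemma rs_Sl f a n : rs f a (S n) = f a + rs f (S a) n.
Proof. reflexivity. Qed.

Lemma fr_Rplus_c (l : list R) c : fold_right Rplus c l = fold_right Rplus 0 l + c.
Proof. induction l; simpl; [lra | rewrite IHl; lra]. Qed.

Lemma rs_Sr f a n : rs f a (S n) = rs f a n + f (a+n)%nat.
Proof. unfold rs; rewrite seq_S, map_app, fold_right_app; simpl.
  rewrite fr_Rplus_c; lra. Qed.

Lemma rs_ext f g a n : (forall i, (a <= i < a+n)%nat -> f i = g i) -> rs f a n = rs g a n.
Proof. revert a; induction n; intros a H; [reflexivity|].
  rewrite !rs_Sl, H by lia. rewrite (IHn (S a)); [reflexivity|]. intros; apply H; lia. Qed.

Lemma rs_plus f g a n : rs (fun i => f i + g i) a n = rs f a n + rs g a n.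
Proof. revert a; induction n; intros a; [unfold rs; simpl; lra|].
  rewrite !rs_Sl, IHn; lra. Qed.

Lemma rs_scal c f a n : rs (fun i => c * f i) a n = c * rs f a n.
Proof. revert a; induction n; intros a; [unfold rs; simpl; lra|].
  rewrite !rs_Sl, IHn; lra. Qed.

Lemma rs_minus f g a n : rs (fun i => f i - g i) a n = rs f a n - rs g a n.
Proof. revert a; induction n; intros a; [unfold rs; simpl; lra|].
  rewrite !rs_Sl, IHn; lra. Qed.

Lemma rs_zero f a n : (forall i, (a <= i < a+n)%nat -> f i = 0) -> rs f a n = 0.
Proof. intros H. rewrite (rs_ext f (fun _ => 0)) by auto.
  clear H; revert a; induction n; intros; [reflexivity|]. rewrite rs_Sl, IHn; lra. Qed.

Lemma rs_swap (F : nat -> nat -> R) a n b m :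
  rs (fun i => rs (fun j => F i j) b m) a n = rs (fun j => rs (fun i => F i j) a n) b m.
Proof. revert a; induction n; intros a.
  - symmetry; apply rs_zero; intros; reflexivity.
  - rewrite rs_Sl, IHn, <- rs_plus. apply rs_ext; intros; rewrite rs_Sl; reflexivity. Qed.

Lemma rs_tele u a n : rs (fun i => u (S i) - u i) a n = u (a+n)%nat - u a.
Proof. revert a; induction n; intros a; [unfold rs; simpl; rewrite Nat.add_0_r; lra|].
  rewrite rs_Sl, IHn. replace (S a + n)%nat with (a + S n)%nat by lia. lra. Qed.

Lemma rs_single f a n i0 : (a <= i0 < a+n)%nat ->
  (forall i, (a<=i<a+n)%nat -> i <> i0 -> f i = 0) -> rs f a n = f i0.
Proof. revert a; induction n; intros a Hi H; [lia|].
  rewrite rs_Sl. destruct (Nat.eq_dec a i0) as [->|Hne].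
  - rewrite rs_zero; [lra|]. intros; apply H; lia.
  - rewrite H by lia. rewrite IHn; [lra|lia|]. intros; apply H; lia. Qed.

Lemma fr_perm (l l' : list R) : Permutation l l' -> fold_right Rplus 0 l = fold_right Rplus 0 l'.
Proof. induction 1; simpl; lra. Qed.

Lemma IZR_fold (l : list Z) : IZR (fold_right Z.add 0%Z l) = fold_right Rplus 0 (map IZR l).
Proof. induction l; simpl; [reflexivity|]. rewrite plus_IZR, IHl; reflexivity. Qed.

Lemma rs_const c a n : rs (fun _ => c) a n = INR n * c.
Proof. revert a; induction n; intros a; [unfold rs; simpl; lra|].
  rewrite rs_Sl, IHn, S_INR; lra. Qed.

Lemma sinZPI n : sin (IZR n * PI) = 0.
Proof. apply sin_eq_0_1; eauto. Qed.
Lemma cos2ZPI n : cos (2 * (IZR n * PI)) = 1.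
Proof. rewrite cos_2a_sin, sinZPI; lra. Qed.
Lemma sin2ZPI n : sin (2 * (IZR n * PI)) = 0.
Proof. rewrite sin_2a, sinZPI; lra. Qed.

Lemma cosZPI n : cos (IZR n * PI) = if Z.even n then 1 else -1.
Proof. destruct (Z.even n) eqn:E.
  - apply Z.even_spec in E as [m ->]. rewrite mult_IZR.
    replace (2 * IZR m * PI) with (2 * (IZR m * PI)) by ring. apply cos2ZPI.
  - assert (Z.odd n = true) by (rewrite <- Z.negb_even, E; reflexivity).
    apply Z.odd_spec in H as [m ->]. rewrite plus_IZR, mult_IZR.
    replace ((2 * IZR m + 1) * PI) with (2 * (IZR m * PI) + PI) by ring.
    rewrite neg_cos, cos2ZPI; lra. Qed.

Lemma cos_odd_half m : Z.odd m = true -> cos (IZR m * PI / 2) = 0.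
Proof. intros H; apply Z.odd_spec in H as [n ->]. rewrite plus_IZR, mult_IZR.
  replace ((2 * IZR n + 1) * PI / 2) with (IZR n * PI + PI/2) by field.
  rewrite cos_plus, cos_PI2, sin_PI2, sinZPI; ring. Qed.

Lemma half_facts z : cos z = 0 -> cos (2*z) = -1 /\ sin (2*z) = 0.
Proof. intros H; rewrite cos_2a_cos, sin_2a, H; split; ring. Qed.

Lemma tel_cot (K : nat) x : (1 <= K)%nat -> cos (INR K * x) = 0 ->
  2 * sin x * rs (fun b => sin (2 * INR b * x)) 1 (K-1) = 2 * cos x.
Proof. intros HK Hc. destruct (half_facts _ Hc) as [H1 H2].
  rewrite <- rs_scal.
  rewrite (rs_ext _ (fun b => (fun i => - cos ((2 * INR i - 1) * x)) (S b)
                 - (fun i => - cos ((2 * INR i - 1) * x)) b)).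
  - rewrite (rs_tele (fun i => - cos ((2 * INR i - 1) * x))). replace (1 + (K-1))%nat with K by lia. simpl.
    replace ((2 * INR K - 1) * x) with (2 * (INR K * x) - x) by ring.
    rewrite cos_minus, H1, H2. replace ((2*1-1)*x) with x by ring. ring.
  - intros i _. rewrite S_INR.
    replace ((2 * (INR i + 1) - 1) * x) with (2 * INR i * x + x) by ring.
    replace ((2 * INR i - 1) * x) with (2 * INR i * x - x) by ring.
    rewrite cos_plus, cos_minus. ring. Qed.

Lemma alt_zero (K : nat) y : cos (INR K * y) = 0 -> cos y <> 0 ->
  rs (fun a => (-1)^a * sin ((2 * INR a + 1) * y)) 0 K = 0.
Proof. intros Hc Hy. destruct (half_facts _ Hc) as [H1 H2].
  assert (E : 2 * cos y * rs (fun a => (-1)^a * sin ((2 * INR a + 1) * y)) 0 K = 0).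
  { rewrite <- rs_scal.
    rewrite (rs_ext _ (fun a => (fun i => - (-1)^i * sin (2 * INR i * y)) (S a)
                 - (fun i => - (-1)^i * sin (2 * INR i * y)) a)).
    - rewrite (rs_tele (fun i => - (-1)^i * sin (2 * INR i * y))). simpl. replace (2 * INR K * y) with (2 * (INR K * y)) by ring.
      rewrite H2. replace (2*0*y) with 0 by ring. rewrite sin_0. ring.
    - intros i _. rewrite S_INR. simpl pow.
      replace (2 * (INR i + 1) * y) with (2 * INR i * y + 2 * y) by ring.
      replace ((2 * INR i + 1) * y) with (2 * INR i * y + y) by ring.
      rewrite !sin_plus, sin_2a, cos_2a_cos. ring. }
  apply Rmult_integral in E as [E|E]; [lra|exact E]. Qed.

Lemma tel_tan (m : nat) y : cos (INR (2*m+1) * y) = 0 -> cos y <> 0 ->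
  INR (2*m+1) * sin y = 2 * cos y * rs (fun a => INR a * (-1)^a * sin (2 * INR a * y)) 1 (2*m+1-1).
Proof. intros Hc Hy. set (K := (2*m+1)%nat) in *.
  destruct (half_facts _ Hc) as [H1 H2].
  pose proof (alt_zero K y Hc Hy) as HA.
  replace K with (S (K-1)) in HA by (unfold K; lia). rewrite rs_Sl in HA.
  simpl in HA. replace ((2*0+1)*y) with y in HA by ring.
  rewrite <- rs_scal.
  set (u := fun i => - (-1)^i * INR i * sin ((2 * INR i - 1) * y)).
  rewrite (rs_ext _ (fun a => (u (S a) - u a) - (-1)^a * sin ((2 * INR a + 1) * y))).
  - rewrite rs_minus, (rs_tele u). replace (1 + (K-1))%nat with K by (unfold K; lia).
    unfold u. simpl pow.
    assert (HK : (-1)^K = -1). { unfold K. replace (2*m+1)%nat with (S (2*m)) by lia. apply pow_1_odd. }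
    rewrite HK. replace ((2 * INR K - 1) * y) with (2 * (INR K * y) - y) by ring.
    rewrite sin_minus, H1, H2. replace (INR 1) with 1 by reflexivity.
    replace ((2*1-1)*y) with y by ring. lra.
  - intros i _. unfold u. rewrite S_INR. simpl pow.
    replace ((2 * (INR i + 1) - 1) * y) with (2 * INR i * y + y) by ring.
    replace ((2 * INR i + 1) * y) with (2 * INR i * y + y) by ring.
    replace ((2 * INR i - 1) * y) with (2 * INR i * y - y) by ring.
    rewrite sin_plus, sin_minus. ring. Qed.

Lemma cos_sum (K : nat) t :
  2 * sin t * rs (fun j => cos (t * (2 * INR j - 1))) 1 K = sin (2 * INR K * t).
Proof. rewrite <- rs_scal.
  rewrite (rs_ext _ (fun a => (fun i => sin (2 * INR i * t - 2 * t)) (S a)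
                 - (fun i => sin (2 * INR i * t - 2 * t)) a)).
  - rewrite (rs_tele (fun i => sin (2 * INR i * t - 2 * t))). replace (1 + K)%nat with (S K) by lia. rewrite S_INR.
    replace (2 * (INR K + 1) * t - 2 * t) with (2 * INR K * t) by ring.
    replace (INR 1) with 1 by reflexivity; replace (2 * 1 * t - 2 * t) with 0 by ring. rewrite sin_0; ring.
  - intros i _. rewrite S_INR.
    replace (2 * (INR i + 1) * t - 2 * t) with ((2 * INR i * t - t) + t) by ring.
    replace (2 * INR i * t - 2 * t) with ((2 * INR i * t - t) - t) by ring.
    replace (t * (2 * INR i - 1)) with (2 * INR i * t - t) by ring.
    rewrite (sin_plus (2 * INR i * t - t) t), (sin_minus (2 * INR i * t - t) t). ring. Qed.

Lemma cs_zero K t : sin t <> 0 -> sin (2 * INR K * t) = 0 ->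
  rs (fun j => cos (t * (2 * INR j - 1))) 1 K = 0.
Proof. intros H1 H2. pose proof (cos_sum K t) as E. rewrite H2 in E.
  apply Rmult_integral in E as [E|E]; [lra|exact E]. Qed.

Lemma cs_int K m : rs (fun j => cos (IZR m * PI * (2 * INR j - 1))) 1 K = INR K * cos (IZR m * PI).
Proof. rewrite <- rs_const with (a := 1%nat). apply rs_ext; intros j _.
  rewrite INR_IZR_INZ.
  replace (IZR m * PI * (2 * IZR (Z.of_nat j) - 1)) with (2 * (IZR (Z.of_nat j * m) * PI) - IZR m * PI)
    by (rewrite mult_IZR; ring).
  rewrite cos_minus, cos2ZPI, sin2ZPI. ring. Qed.

Definition xx (k : Z) (j : nat) : R := PI * IZR (2 * Z.of_nat j - 1) / (2 * IZR k).

Lemma Kx (K : nat) j : (0 < K)%nat ->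
  INR K * xx (Z.of_nat K) j = IZR (2 * Z.of_nat j - 1) * PI / 2.
Proof. intros HK. unfold xx. rewrite <- INR_IZR_INZ.
  assert (INR K <> 0) by (apply not_0_INR; lia). field; auto. Qed.

Lemma term_eq (h : Z) (m : nat) (j : nat) :
  let K := (2*m+1)%nat in let k := Z.of_nat K in
  Z.gcd h k = 1%Z -> Z.odd h = true -> (1 <= j <= K)%nat ->
  (if Z.eqb (2 * Z.of_nat j) (k + 1) then 0
   else tan (PI * IZR h * IZR (2 * Z.of_nat j - 1) / (2 * IZR k))
        * cot (PI * IZR (2 * Z.of_nat j - 1) / (2 * IZR k)))
  = 2 / INR K * rs (fun a => INR a * (-1)^a * sin (2 * INR a * (IZR h * xx k j))) 1 (K-1)
     * rs (fun b => sin (2 * INR b * xx k j)) 1 (K-1).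
Proof. intros K k Hg Hh Hj.
  assert (HKpos : (0 < K)%nat) by (unfold K; lia).
  assert (HKR : INR K <> 0) by (apply not_0_INR; lia).
  assert (Hkr : IZR k <> 0) by (unfold k; rewrite <- INR_IZR_INZ; auto).
  fold (xx k j).
  replace (PI * IZR h * IZR (2 * Z.of_nat j - 1) / (2 * IZR k)) with (IZR h * xx k j)
    by (unfold xx; field; auto).
  destruct (Z.eqb_spec (2 * Z.of_nat j) (k + 1)) as [E|E].
  - rewrite (rs_zero (fun b => sin (2 * INR b * xx k j))); [ring|].
    intros b _. unfold xx. replace (2 * Z.of_nat j - 1)%Z with k by lia.
    replace (2 * INR b * (PI * IZR k / (2 * IZR k))) with (IZR (Z.of_nat b) * PI)
      by (rewrite <- INR_IZR_INZ; field; auto). apply sinZPI.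
  - assert (Hodd : Z.odd (2 * Z.of_nat j - 1) = true).
    { replace (2 * Z.of_nat j - 1)%Z with (1 + 2 * (Z.of_nat j - 1))%Z by ring.
      rewrite Z.odd_add_mul_2. reflexivity. }
    assert (C1 : cos (INR K * xx k j) = 0).
    { unfold k; rewrite Kx by auto. apply cos_odd_half; auto. }
    assert (C2 : cos (INR K * (IZR h * xx k j)) = 0).
    { replace (INR K * (IZR h * xx k j)) with (IZR (h * (2 * Z.of_nat j - 1)) * PI / 2).
      - apply cos_odd_half. rewrite Z.odd_mul, Hh, Hodd; reflexivity.
      - rewrite mult_IZR. replace (INR K * (IZR h * xx k j)) with (IZR h * (INR K * xx k j)) by ring.
        unfold k; rewrite Kx by auto. unfold Rdiv; ring. }
    pose proof PI_neq0 as HPI.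
    assert (S1 : sin (xx k j) <> 0).
    { intros H. apply sin_eq_0_0 in H as [n Hn]. unfold xx in Hn.
      assert (IZR (2 * Z.of_nat j - 1) = IZR (2 * k * n)).
      { rewrite !mult_IZR.
        replace (IZR (2 * Z.of_nat j - 1)) with
          ((PI * IZR (2 * Z.of_nat j - 1) / (2 * IZR k)) * (2 * IZR k) / PI) by (field; auto).
        rewrite Hn. field; auto. }
      apply eq_IZR in H. assert (Z.odd (2 * k * n) = true) by (rewrite <- H; auto).
      rewrite <- Z.mul_assoc, Z.odd_mul in H0. discriminate. }
    assert (S2 : cos (IZR h * xx k j) <> 0).
    { intros H. apply cos_eq_0_0 in H as [n Hn]. unfold xx in Hn.
      assert (IZR (h * (2 * Z.of_nat j - 1)) = IZR (k * (2 * n + 1))).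
      { rewrite !mult_IZR, plus_IZR, mult_IZR.
        replace (IZR h * IZR (2 * Z.of_nat j - 1)) with
          ((IZR h * (PI * IZR (2 * Z.of_nat j - 1) / (2 * IZR k))) * (2 * IZR k) / PI) by (field; auto).
        rewrite Hn. field; auto. }
      apply eq_IZR in H.
      assert (Hd : (k | 2 * Z.of_nat j - 1)%Z).
      { apply Z.gauss with h. exists (2*n+1)%Z. rewrite H; ring. rewrite Z.gcd_comm; auto. }
      destruct Hd as [q Hq].
      assert (Hb : (1 <= Z.of_nat j <= k)%Z) by (unfold k; lia).
      assert (Hkp : (0 < k)%Z) by (unfold k, K; lia).
      clearbody k. assert (q = 1)%Z by nia. subst q. lia. }
    pose proof (tel_tan m (IZR h * xx k j) C2 S2) as TT. fold K in TT.
    pose proof (tel_cot K (xx k j) ltac:(lia) C1) as TC.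
    unfold tan, cot.
    replace (cos (xx k j) / sin (xx k j)) with (rs (fun b => sin (2 * INR b * xx k j)) 1 (K-1))
      by (field_simplify_eq; [lra | auto]).
    replace (sin (IZR h * xx k j) / cos (IZR h * xx k j)) with
      (2 / INR K * rs (fun a => INR a * (-1)^a * sin (2 * INR a * (IZR h * xx k j))) 1 (K-1)).
    + reflexivity.
    + field_simplify_eq; [|split;auto]. lra.
Qed.

Definition Cs (K : nat) (N : Z) : R :=
  rs (fun j => cos ((IZR N * PI / IZR (Z.of_nat K)) * (2 * INR j - 1))) 1 K.

Lemma Cs_nd K N : (0 < K)%nat -> ~ (Z.of_nat K | N)%Z -> Cs K N = 0.
Proof. intros HK Hn. unfold Cs. pose proof PI_neq0 as HPI.
  assert (Hk : IZR (Z.of_nat K) <> 0) by (rewrite <- INR_IZR_INZ; apply not_0_INR; lia).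
  apply cs_zero.
  - intros H. apply sin_eq_0_0 in H as [n Hn']. apply Hn. exists n.
    apply eq_IZR. rewrite mult_IZR.
    replace (IZR N) with ((IZR N * PI / IZR (Z.of_nat K)) * IZR (Z.of_nat K) / PI) by (field; auto).
    rewrite Hn'. field; auto.
  - rewrite INR_IZR_INZ. replace (2 * IZR (Z.of_nat K) * (IZR N * PI / IZR (Z.of_nat K)))
      with (2 * (IZR N * PI)) by (field; auto). apply sin2ZPI. Qed.

Lemma Cs_d K q : (0 < K)%nat -> Cs K (Z.of_nat K * q) = INR K * cos (IZR q * PI).
Proof. intros HK. unfold Cs.
  assert (Hk : IZR (Z.of_nat K) <> 0) by (rewrite <- INR_IZR_INZ; apply not_0_INR; lia).
  rewrite <- cs_int. apply rs_ext; intros j _. f_equal. rewrite mult_IZR. field; auto. Qed.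

Lemma prodsum P Q : sin P * sin Q = (cos (P - Q) - cos (P + Q)) / 2.
Proof. rewrite cos_minus, cos_plus. field. Qed.

Lemma inner (h : Z) (K a : nat) : (0 < K)%nat -> Z.gcd h (Z.of_nat K) = 1%Z -> (1 <= a <= K - 1)%nat ->
  rs (fun b => rs (fun j => sin (2 * INR a * (IZR h * xx (Z.of_nat K) j)) * sin (2 * INR b * xx (Z.of_nat K) j)) 1 K) 1 (K-1)
  = INR K * cos (IZR ((h * Z.of_nat a) / Z.of_nat K) * PI).
Proof. intros HK Hg Ha. set (k := Z.of_nat K).
  assert (Hk : IZR k <> 0) by (unfold k; rewrite <- INR_IZR_INZ; apply not_0_INR; lia).
  assert (Hkp : (0 < k)%Z) by (unfold k; lia).
  rewrite (rs_ext _ (fun b => / 2 * (Cs K (h * Z.of_nat a - Z.of_nat b) - Cs K (h * Z.of_nat a + Z.of_nat b)))).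
  2:{ intros b _. unfold Cs. rewrite <- rs_minus, <- rs_scal. apply rs_ext; intros j _.
      rewrite prodsum. fold k. unfold xx. unfold Rdiv at 1. rewrite Rmult_comm. f_equal. f_equal; f_equal.
      - rewrite minus_IZR, mult_IZR, minus_IZR, mult_IZR, <- !INR_IZR_INZ. field; auto.
      - rewrite plus_IZR, mult_IZR, minus_IZR, mult_IZR, <- !INR_IZR_INZ. field; auto. }
  rewrite rs_scal, rs_minus.
  pose (r := ((h * Z.of_nat a) mod k)%Z). set (f := ((h * Z.of_nat a) / k)%Z).
  assert (Hdm : (h * Z.of_nat a = k * f + r)%Z) by (apply Z.div_mod; lia).
  assert (Hr : (0 <= r < k)%Z) by (apply Z.mod_pos_bound; lia).
  assert (Hr0 : r <> 0%Z).
  { intros E. assert (Hd : (k | Z.of_nat a)%Z).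
    { apply Z.gauss with h. exists f. rewrite Hdm, E; ring. rewrite Z.gcd_comm; auto. }
    destruct Hd as [q Hq]. assert (Hab : (1 <= Z.of_nat a <= k - 1)%Z) by (unfold k; lia). clearbody k f r. clear Hdm Hk Hg. destruct (Z.le_gt_cases q 0); nia. }
  clearbody f r.
  rewrite (rs_single _ 1 (K-1) (Z.to_nat r)).
  2:{ lia. }
  2:{ intros b Hb Hne. apply Cs_nd; auto. fold k. intros [q Hq].
        assert (Hz : (r - Z.of_nat b = k * (q - f))%Z) by lia.
        assert (Hb' : (1 <= Z.of_nat b <= k - 1)%Z) by (unfold k; lia).
        assert (Hne' : Z.of_nat b <> r) by lia.
        clearbody k. clear Hq Hdm. destruct (Z.lt_total (q - f) 0) as [H|[H|H]]; [nia| |nia].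
        rewrite H in Hz. lia. }
  rewrite (rs_single _ 1 (K-1) (Z.to_nat (k - r))).
  2:{ lia. }
  2:{ intros b Hb Hne. apply Cs_nd; auto. fold k. intros [q Hq].
        assert (Hz : (r + Z.of_nat b = k * (q - f))%Z) by lia.
        assert (Hb' : (1 <= Z.of_nat b <= k - 1)%Z) by (unfold k; lia).
        assert (Hne' : Z.of_nat b <> (k - r)%Z) by lia.
        clearbody k. clear Hq Hdm. destruct (Z.lt_total (q - f) 1) as [H|[H|H]]; [nia| |nia].
        rewrite H in Hz. lia. }
  replace (h * Z.of_nat a - Z.of_nat (Z.to_nat r))%Z with (k * f)%Z by lia.
  replace (h * Z.of_nat a + Z.of_nat (Z.to_nat (k - r)))%Z with (k * (f + 1))%Z by lia.
  unfold k. rewrite !Cs_d by auto. rewrite plus_IZR, Rmult_plus_distr_r, Rmult_1_l, neg_cos. field.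
Qed.

Lemma rs_mul f g a n b m : rs f a n * rs g b m = rs (fun i => rs (fun l => f i * g l) b m) a n.
Proof. rewrite Rmult_comm, <- rs_scal. apply rs_ext; intros i _.
  rewrite Rmult_comm, <- rs_scal. apply rs_ext; intros; ring. Qed.

Lemma modnz h K j : Z.gcd h (Z.of_nat K) = 1%Z -> (1 <= j <= K - 1)%nat ->
  ((h * Z.of_nat j) mod Z.of_nat K <> 0)%Z.
Proof. intros Hg Hj E. apply Z.mod_divide in E; [|lia].
  apply Z.gauss in E; [|rewrite Z.gcd_comm; auto]. destruct E as [q Hq].
  assert (Hab : (1 <= Z.of_nat j <= Z.of_nat K - 1)%Z) by lia.
  destruct (Z.le_gt_cases q 0); nia. Qed.

Definition sg (z : Z) : R := if Z.even z then 1 else -1.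

Lemma pm1 j : (-1)^j = sg (Z.of_nat j).
Proof. unfold sg. induction j; [reflexivity|].
  rewrite Nat2Z.inj_succ, Z.even_succ, <- Z.negb_even. simpl pow. rewrite IHj.
  destruct (Z.even (Z.of_nat j)); simpl; ring. Qed.

Lemma alt_sum m : rs (fun j => sg (Z.of_nat j) * IZR (Z.of_nat j)) 1 (2*m) = INR m.
Proof. induction m; [reflexivity|].
  replace (2 * S m)%nat with (S (S (2*m))) by lia. rewrite !rs_Sr, IHm.
  unfold sg. replace (Z.of_nat (1 + 2*m)) with (1 + 2 * Z.of_nat m)%Z by lia.
  replace (Z.of_nat (1 + S (2*m))) with (2 * (Z.of_nat m + 1))%Z by lia.
  rewrite <- Z.negb_odd, Z.odd_add_mul_2, Z.even_mul.
  change (Z.odd 1) with true; change (Z.even 2) with true; cbn [negb orb].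
  rewrite S_INR, plus_IZR, !mult_IZR, plus_IZR, <- INR_IZR_INZ. ring. Qed.

Lemma perm_sum h K (G : Z -> R) : (0 < K)%nat -> Z.gcd h (Z.of_nat K) = 1%Z ->
  rs (fun j => G ((h * Z.of_nat j) mod Z.of_nat K)%Z) 1 (K-1) = rs (fun j => G (Z.of_nat j)) 1 (K-1).
Proof. intros HK Hg. set (phi := fun j : nat => Z.to_nat ((h * Z.of_nat j) mod Z.of_nat K)).
  assert (Hb : forall j, (1 <= j <= K-1)%nat -> (0 < (h * Z.of_nat j) mod Z.of_nat K < Z.of_nat K)%Z).
  { intros j Hj. pose proof (modnz h K j Hg Hj). pose proof (Z.mod_pos_bound (h * Z.of_nat j) (Z.of_nat K)). lia. }
  rewrite (rs_ext _ (fun j => (fun i => G (Z.of_nat i)) (phi j))).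
  2:{ intros j Hj. unfold phi. rewrite Z2Nat.id; [reflexivity|]. specialize (Hb j ltac:(lia)). lia. }
  unfold rs. rewrite <- (map_map phi (fun i => G (Z.of_nat i))). apply fr_perm. apply Permutation_map.
  apply Permutation_map_same_l.
  - apply FinFun.Injective_map_NoDup_in; [|apply seq_NoDup].
    intros x y Hx Hy E. apply in_seq in Hx, Hy. unfold phi in E.
    pose proof (Hb x ltac:(lia)). pose proof (Hb y ltac:(lia)).
    apply Z2Nat.inj in E; try lia.
    assert (Hd : (Z.of_nat K | h * (Z.of_nat x - Z.of_nat y))%Z).
    { apply Z.mod_divide; [lia|]. rewrite Z.mul_sub_distr_l.
      rewrite Zminus_mod, E, Z.sub_diag. reflexivity. }
    apply Z.gauss in Hd; [|rewrite Z.gcd_comm; auto]. destruct Hd as [q Hq].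
    assert (Hab : (1 <= Z.of_nat x <= Z.of_nat K - 1)%Z) by lia.
    assert (Hab' : (1 <= Z.of_nat y <= Z.of_nat K - 1)%Z) by lia.
    destruct (Z.lt_total q 0) as [H1|[H1|H1]]; [nia| |nia]. subst q. lia.
  - intros z Hz. apply in_map_iff in Hz as [j [<- Hj]]. apply in_seq in Hj.
    apply in_seq. unfold phi. pose proof (Hb j ltac:(lia)). lia.
Qed.

Lemma par h k j f : Z.odd h = true -> Z.odd k = true -> Z.even (h * j - k * f) = Z.even (j + f).
Proof. intros Hh Hk. rewrite Z.even_sub, !Z.even_mul, Z.even_add.
  rewrite <- (Z.negb_odd h), <- (Z.negb_odd k), Hh, Hk. simpl.
  destruct (Z.even j), (Z.even f); reflexivity. Qed.

Lemma main (m : nat) (h : Z) :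
  Z.gcd h (Z.of_nat (2*m+1)) = 1%Z -> Z.odd h = true ->
  IZR (B_one h (Z.of_nat (2*m+1))) =
    IZR h / (2 * IZR (Z.of_nat (2*m+1))) * tan_cot_sum h (Z.of_nat (2*m+1))
    + 1 / (2 * IZR (Z.of_nat (2*m+1))) - 1 / 2.
Proof. intros Hg Hh.
  assert (HK : (0 < 2*m+1)%nat) by lia.
  assert (HkK : IZR (Z.of_nat (2*m+1)) = INR (2*m+1)) by (rewrite INR_IZR_INZ; reflexivity).
  assert (HKm : INR (2*m+1) = 2 * INR m + 1) by (rewrite plus_INR, mult_INR; simpl; ring).
  assert (Hko : Z.odd (Z.of_nat (2*m+1)) = true).
  { replace (Z.of_nat (2*m+1)) with (1 + 2 * Z.of_nat m)%Z by lia. rewrite Z.odd_add_mul_2; reflexivity. }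
  set (K := (2*m+1)%nat) in *. set (k := Z.of_nat K) in *.
  set (fl := fun j : nat => (h * Z.of_nat j / k)%Z).
  assert (HT : tan_cot_sum h k = 2 * rs (fun a => INR a * sg (Z.of_nat a + fl a)) 1 (K-1)).
  { unfold tan_cot_sum. replace (Z.to_nat k) with K by (unfold k; lia).
    change (fold_right Rplus 0 (map ?F (seq 1 K))) with (rs F 1 K).
    rewrite (rs_ext _ (fun j => 2 / INR K * rs (fun a => INR a * (-1)^a * sin (2 * INR a * (IZR h * xx k j))) 1 (K-1)
       * rs (fun b => sin (2 * INR b * xx k j)) 1 (K-1))).
    2:{ intros j Hj. apply (term_eq h m j); auto; lia. }
    transitivity (2 / INR K * rs (fun j => rs (fun a => rs (fun b => (INR a * (-1)^a) *
       (sin (2*INR a*(IZR h * xx k j)) * sin (2*INR b*xx k j))) 1 (K-1)) 1 (K-1)) 1 K).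
    { rewrite <- rs_scal. apply rs_ext; intros j _. rewrite Rmult_assoc, rs_mul. f_equal.
      apply rs_ext; intros a _; apply rs_ext; intros b _; ring. }
    rewrite rs_swap.
    rewrite (rs_ext _ (fun a => INR K * (INR a * sg (Z.of_nat a + fl a)))).
    - rewrite rs_scal. field. apply not_0_INR; lia.
    - intros a Ha. rewrite rs_swap.
      transitivity (INR a * (-1)^a * rs (fun b => rs (fun j =>
          sin (2 * INR a * (IZR h * xx k j)) * sin (2 * INR b * xx k j)) 1 K) 1 (K-1)).
      { rewrite <- rs_scal. apply rs_ext; intros b _. rewrite <- rs_scal. reflexivity. }
      unfold k. rewrite (inner h K a) by (auto; lia). fold k.
      rewrite pm1, cosZPI. unfold sg, fl. rewrite Z.even_add.
      destruct (Z.even (Z.of_nat a)), (Z.even (h * Z.of_nat a / k)); simpl; ring. }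
  assert (HB : IZR (B_one h k) = rs (fun j => IZR (fl j) * sg (Z.of_nat j + fl j)) 1 (K-1)).
  { unfold B_one. rewrite IZR_fold, map_map. replace (Z.to_nat (k-1)) with (K-1)%nat by (unfold k; lia).
    change (fold_right Rplus 0 (map ?F (seq 1 (K-1)))) with (rs F 1 (K-1)).
    apply rs_ext; intros j _. unfold sg, fl, floorQ. cbv zeta.
    destruct (Z.even _); [ring | rewrite opp_IZR; ring]. }
  assert (HC : IZR h * rs (fun a => INR a * sg (Z.of_nat a + fl a)) 1 (K-1)
             - IZR k * rs (fun j => IZR (fl j) * sg (Z.of_nat j + fl j)) 1 (K-1) = INR m).
  { rewrite <- !rs_scal, <- rs_minus.
    rewrite (rs_ext _ (fun j => (fun z => sg z * IZR z) ((h * Z.of_nat j) mod Z.of_nat K)%Z)).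
    - rewrite (perm_sum h K (fun z => sg z * IZR z)) by auto. replace (K-1)%nat with (2*m)%nat by (unfold K; lia). apply alt_sum.
    - intros j _. rewrite Zmod_eq_full by (unfold k in *; lia). fold k.
      replace (h * Z.of_nat j - h * Z.of_nat j / k * k)%Z with (h * Z.of_nat j - k * fl j)%Z
        by (unfold fl; ring).
      unfold sg. rewrite par by auto.
      rewrite minus_IZR, !mult_IZR, <- INR_IZR_INZ.
      destruct (Z.even _); ring. }
  rewrite HB, HT.
  set (X := rs (fun j => IZR (fl j) * sg (Z.of_nat j + fl j)) 1 (K-1)) in *.
  set (Y := rs (fun a => INR a * sg (Z.of_nat a + fl a)) 1 (K-1)) in *.
  unfold k in *. rewrite HkK in *. rewrite HKm in *.
  assert (0 <= INR m) by apply pos_INR.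
  replace (IZR h / (2 * (2 * INR m + 1)) * (2 * Y)) with (IZR h * Y / (2 * INR m + 1)) by (field; lra).
  replace (IZR h * Y) with ((2 * INR m + 1) * X + INR m) by lra.
  field. lra.
Qed.

Theorem theorem24 (h k : Z) :
  (0 < k)%Z -> (Z.gcd h k = 1)%Z -> Z.odd h = true -> Z.odd k = true ->
  IZR (B_one h k) =
    IZR h / (2 * IZR k) * tan_cot_sum h k + 1 / (2 * IZR k) - 1 / 2.
Proof. intros Hk Hg Hh Hko.
  apply Z.odd_spec in Hko as [n Hn].
  replace k with (Z.of_nat (2 * Z.to_nat n + 1)) in * by lia.
  apply main; auto.
Qed.
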